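(* Let $n\ge4$, $x_1,\dots,x_{n-1}>0$, $\gamma,\delta>0$ with $\gamma\ne1\ne\delta$, $x_0=1$, and let $\mathbf{P}$ be the $n\times n$ matrix with entries $p_{ij}=x_{j-1}/x_{i-1}$ except $p_{12}=\delta x_1$, $p_{21}=1/(\delta x_1)$, $p_{13}=\gamma x_2$, $p_{31}=1/(\gamma x_2)$. Let $\mathbf{w}^{EM}$ be the principal right eigenvector of $\mathbf{P}$. If $\gamma,\delta>1$, then $w_1^{EM}/w_i^{EM}>x_{i-1}$ for $i=4,\dots,n$.
   Context: The principal right eigenvector is the positive (Perron) eigenvector belonging to the largest eigenvalue. *)

(* Defs.v *)
From HB Require Import structures.
From mathcomp Require Import all_boot all_order all_algebra.
From mathcomp Require Import reals.
Set Implicit Arguments. Unset Strict Implicit. Unset Printing Implicit Defensive.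
Import Order.TTheory GRing.Theory Num.Theory.
Local Open Scope ring_scope.

(* Indices are 0-based: row/column i : 'I_n corresponds to the paper's i+1.
   x : nat -> R with x 0 = 1 (the paper's x_0). *)
Definition Pmat (R : realType) (n : nat) (x : nat -> R) (gamma delta : R)
  : 'M[R]_n :=
  \matrix_(i < n, j < n)
    if (nat_of_ord i == 0%N) && (nat_of_ord j == 1%N) then delta * x 1%N
    else if (nat_of_ord i == 1%N) && (nat_of_ord j == 0%N) then (delta * x 1%N)^-1
    else if (nat_of_ord i == 0%N) && (nat_of_ord j == 2%N) then gamma * x 2%N
    else if (nat_of_ord i == 2%N) && (nat_of_ord j == 0%N) then (gamma * x 2%N)^-1
    else x (nat_of_ord j) / x (nat_of_ord i).

Definition principal_right_eigenvector (R : realType) (n : nat)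
  (A : 'M[R]_n) (w : 'cV[R]_n) : Prop :=
  exists lambda : R,
    [/\ A *m w = lambda *: w,
        (forall i, 0 < w i 0) &
        (forall mu : R, eigenvalue A mu -> mu <= lambda)].

(* Entry of a column vector at a natural-number index (0 if out of range). *)
Definition cv_at (R : realType) (n : nat) (w : 'cV[R]_n) (k : nat) : R :=
  if @insub nat (fun m => (m < n)%N) 'I_n k is Some i then w i 0 else 0.

(* Main.v *)
Require Import Defs.
From HB Require Import structures.
From mathcomp Require Import all_boot all_order all_algebra.
From mathcomp Require Import reals.
From mathcomp Require Import zify.
Import Order.TTheory GRing.Theory Num.Theory.
Local Open Scope ring_scope.

Theorem mainTheorem7 (R : realType) (n : nat) (x : nat -> R) (gamma delta : R)
  (w : 'cV[R]_n) :
  (4 <= n)%N ->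
  x 0%N = 1 ->
  (forall k : nat, (1 <= k <= n.-1)%N -> 0 < x k) ->
  0 < gamma -> 0 < delta -> gamma != 1 -> delta != 1 ->
  principal_right_eigenvector (Pmat n x gamma delta) w ->
  1 < gamma -> 1 < delta ->
  forall i : 'I_n, (3 <= i)%N -> x i < cv_at w 0 / w i 0.
Proof.
move=> n4 x0 xpos gp dp _ _ [lam [Hev wpos _]] g1 d1 i Hi.
have n0 : (0 < n)%N by lia.
have n1 : (1 < n)%N by lia.
set i0 := Ordinal n0. set i1 := Ordinal n1.
have -> : cv_at w 0 = w i0 0 by rewrite /cv_at insubT.
have xj : forall j : 'I_n, 0 < x j.
  move=> j; case: (eqVneq (j:nat) 0%N) => [->|jn0]; first by rewrite x0.
  apply: xpos; have := ltn_ord j; lia.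
set S := \sum_(j < n) x j * w j 0.
have rowi : lam * w i 0 = (x i)^-1 * S.
  have := congr1 (fun M : 'M[R]_(n,1) => M i 0) Hev; rewrite !mxE => <-.
  rewrite /S mulr_sumr; apply: eq_bigr => j _; rewrite mxE.
  have h0 : (i:nat) != 0%N by lia.
  have h1 : (i:nat) != 1%N by lia.
  have h2 : (i:nat) != 2%N by lia.
  rewrite (negbTE h0) (negbTE h1) (negbTE h2).
  by rewrite mulrA (mulrC (x i)^-1).
have row0 : S < lam * w i0 0.
  have := congr1 (fun M : 'M[R]_(n,1) => M i0 0) Hev; rewrite !mxE => <-.
  rewrite /S (bigD1 i1) //= [X in _ < X](bigD1 i1) //=.
  apply: ltr_leD.
    rewrite mxE /= ltr_pM2r ?wpos //.
    by rewrite -[X in X < _]mul1r ltr_pM2r // (xj i1).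
  apply: ler_sum => j _; rewrite mxE /=.
  case: (eqVneq (j:nat) 1%N) => [->|j1] /=.
    by rewrite ler_pM2r ?wpos // -[X in X <= _]mul1r ler_pM2r ?(xj i1) ?ltW.
  case: (eqVneq (j:nat) 2%N) => [e|j2] /=.
    have n2 : (2 < n)%N by lia.
    rewrite ler_pM2r ?wpos // e -[X in X <= _]mul1r ler_pM2r ?ltW //.
    by rewrite -e; apply: xj.
  by rewrite x0 divr1.
have lpos : 0 < lam.
  have Sp : 0 < S.
    rewrite /S (bigD1 i0) //= ltr_wpDr ?mulr_gt0 ?wpos ?xj ?x0 ?ltr01 //.
    by apply: sumr_ge0 => j _; rewrite mulr_ge0 ?ltW ?wpos ?xj.
  by rewrite -(pmulr_lgt0 _ (wpos i0)) (lt_trans Sp row0).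
rewrite ltr_pdivlMr ?wpos //.
rewrite -(ltr_pM2l lpos) mulrA [lam * x i]mulrC -mulrA rowi mulrA mulfV ?mul1r //.
exact: lt0r_neq0 (xj i).
Qed.
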